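(* Under Assumption 1, let $(x^k)_{k\in\mathbb{N}}$ be generated by PPGA. Then $x^k\in\mathrm{dom}(F)$ for all $k$, and: (i) $F(x^{k+1})+\frac{1/\alpha_k-L}{2g(x^{k+1})}\|x^{k+1}-x^k\|_2^2\le F(x^k)$ for all $k\in\mathbb{N}$; (ii) $\lim_{k\to\infty}C_k=\lim_{k\to\infty}F(x^k)=C$ for some $C\ge0$; (iii) $\lim_{k\to\infty}\frac{1/\alpha_k-L}{g(x^{k+1})}\|x^{k+1}-x^k\|_2^2=0$.
   Context: Let $f:\mathbb{R}^n\to(-\infty,+\infty]$ be proper lsc, $g,h:\mathbb{R}^n\to\mathbb{R}$, $\Omega:=\{x:g(x)\ne0\}$, $F(x):=\frac{f(x)+h(x)}{g(x)}$ on $\Omega\cap\mathrm{dom}(f)$ and $+\infty$ otherwise. Assumption 1: (i) $f$ locally Lipschitz on $\mathrm{dom}(f)\cap\Omega$; (ii) $g$ locally Lipschitz continuously differentiable and positive on $\Omega\cap\mathrm{dom}(f)$; (iii) $\nabla h$ is $L$-Lipschitz, $L>0$; (iv) $f+h\ge0$ on $\mathrm{dom}(f)$, $\Omega\cap\mathrm{dom}(f)\ne\emptyset$; (v) $\mathrm{prox}_{f-\gamma g}(x)\ne\emptyset$ for all $x$, $\gamma\ge0$; (vi) $F$ lsc and level bounded. $\mathrm{prox}_\varphi(x):=\arg\min_u\{\varphi(u)+\frac12\|u-x\|_2^2\}$. PPGA (parameterized proximal-gradient algorithm): choose $x^0\in\Omega\cap\mathrm{dom}(f)$ and step sizes $\alpha_k$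 with $0<\underline\alpha\le\alpha_k\le\overline\alpha<1/L$; for $k=0,1,\dots$ set $C_k:=F(x^k)$ and pick any $x^{k+1}\in\mathrm{prox}_{\alpha_k(f-C_kg)}(x^k-\alpha_k\nabla h(x^k))$. *)

(* Defs.v *)
From HB Require Import structures.
From mathcomp Require Import all_boot all_order all_algebra.
From mathcomp Require Import all_classical all_reals all_analysis.
Set Implicit Arguments. Unset Strict Implicit. Unset Printing Implicit Defensive.
Import Order.TTheory GRing.Theory Num.Theory.
Import numFieldNormedType.Exports.
Local Open Scope classical_set_scope.
Local Open Scope ring_scope.

Section Defs.
Context {R : realType} {n : nat}.
Implicit Types (x y z u v : 'rV[R]_n).

Definition dotv x y : R := \sum_(i < n) x ord0 i * y ord0 i.
Definition norm2 x : R := Num.sqrt (dotv x x).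

Definition grad (h : 'rV[R]_n -> R) x : 'rV[R]_n :=
  \row_(i < n) ('d h x) (delta_mx ord0 i).

Definition edom (f : 'rV[R]_n -> \bar R) : set 'rV[R]_n :=
  [set x | (f x < +oo)%E].

Definition proper_fun (f : 'rV[R]_n -> \bar R) : Prop :=
  (forall x, f x != -oo%E) /\ (exists x, (f x < +oo)%E).

Definition lsc (f : 'rV[R]_n -> \bar R) : Prop :=
  forall x (a : R), (a%:E < f x)%E ->
    exists2 d : R, 0 < d & forall y, norm2 (y - x) < d -> (a%:E < f y)%E.

Definition level_bounded (F : 'rV[R]_n -> \bar R) : Prop :=
  forall a : R, exists M : R, forall x, (F x <= a%:E)%E -> norm2 x <= M.

Definition locally_lipschitz_on (f : 'rV[R]_n -> \bar R) (S : set 'rV[R]_n) :=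
  forall x, S x -> exists2 r : R, 0 < r & exists K : R,
    forall y z, S y -> S z -> norm2 (y - x) < r -> norm2 (z - x) < r ->
      `|fine (f y) - fine (f z)| <= K * norm2 (y - z).

Definition locally_lipschitz_diff_on (g : 'rV[R]_n -> R) (S : set 'rV[R]_n) :=
  forall x, S x -> exists2 r : R, 0 < r & exists K : R,
    (forall y, norm2 (y - x) < r -> differentiable g y) /\
    (forall y z, norm2 (y - x) < r -> norm2 (z - x) < r ->
      norm2 (grad g y - grad g z) <= K * norm2 (y - z)).

Definition prox (phi : 'rV[R]_n -> \bar R) x : set 'rV[R]_n :=
  [set u | forall v, (phi u + (2^-1 * norm2 (u - x) ^+ 2)%:E
                      <= phi v + (2^-1 * norm2 (v - x) ^+ 2)%:E)%E].

Definition Fobj (f : 'rV[R]_n -> \bar R) (g h : 'rV[R]_n -> R) x : \bar R :=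
  if (g x != 0) && (f x < +oo)%E then ((fine (f x) + h x) / g x)%:E else +oo%E.

End Defs.

(* Main.v *)
Require Import Defs.
From HB Require Import structures.
From mathcomp Require Import all_boot all_order all_algebra.
From mathcomp Require Import all_classical all_reals all_analysis.
From mathcomp Require Import ring lra.
Import Order.TTheory GRing.Theory Num.Theory.
Import numFieldNormedType.Exports.
Local Open Scope classical_set_scope.
Local Open Scope ring_scope.

Section Alg.
Context {R : realType} {n : nat}.
Implicit Types (x y z u v : 'rV[R]_n).

Lemma dotvC x y : dotv x y = dotv y x.
Proof. by apply: eq_bigr => i _; rewrite mulrC. Qed.

Lemma dotvDl x y z : dotv (x + y) z = dotv x z + dotv y z.
Proof. by rewrite /dotv -big_split; apply: eq_bigr => i _; rewrite mxE mulrDl. Qed.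

Lemma dotvZl (a : R) x y : dotv (a *: x) y = a * dotv x y.
Proof. by rewrite /dotv mulr_sumr; apply: eq_bigr => i _; rewrite mxE mulrA. Qed.

Lemma dotvNl x y : dotv (- x) y = - dotv x y.
Proof. by rewrite -scaleN1r dotvZl mulN1r. Qed.

Lemma dotvBl x y z : dotv (x - y) z = dotv x z - dotv y z.
Proof. by rewrite dotvDl dotvNl. Qed.

Lemma dotvDr x y z : dotv z (x + y) = dotv z x + dotv z y.
Proof. by rewrite dotvC dotvDl !(dotvC z). Qed.

Lemma dotvZr (a : R) x y : dotv y (a *: x) = a * dotv y x.
Proof. by rewrite dotvC dotvZl dotvC. Qed.

Lemma dotvBr x y z : dotv z (x - y) = dotv z x - dotv z y.
Proof. by rewrite dotvC dotvBl !(dotvC z). Qed.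

Lemma dotv_ge0 x : 0 <= dotv x x.
Proof. by apply: sumr_ge0 => i _; rewrite -expr2 sqr_ge0. Qed.

Lemma norm2_sq x : norm2 x ^+ 2 = dotv x x.
Proof. by rewrite /norm2 sqr_sqrtr // dotv_ge0. Qed.

Lemma norm2_ge0 x : 0 <= norm2 x.
Proof. exact: sqrtr_ge0. Qed.

Lemma dotv_eq0 x : dotv x x = 0 -> x = 0.
Proof.
move=> /eqP; rewrite psumr_eq0; last by move=> i _; rewrite -expr2 sqr_ge0.
move=> /allP H; apply/rowP => i; rewrite mxE.
have := H i (mem_index_enum _); rewrite /= -expr2 sqrf_eq0 => /eqP //.
Qed.

Lemma norm2_eq0 x : norm2 x = 0 -> x = 0.
Proof. by move=> H; apply: dotv_eq0; rewrite -norm2_sq H expr0n. Qed.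

Lemma norm2Z (a : R) x : norm2 (a *: x) = `|a| * norm2 x.
Proof.
by rewrite /norm2 dotvZl dotvZr mulrA -expr2 sqrtrM ?sqr_ge0 // sqrtr_sqr.
Qed.

Lemma CS x y : dotv x y <= norm2 x * norm2 y.
Proof.
have [->|x0] := eqVneq x 0.
  by rewrite -(scale0r 0) dotvZl mul0r mulr_ge0 // norm2_ge0.
have [->|y0] := eqVneq y 0.
  by rewrite -(scale0r 0) dotvZr mul0r mulr_ge0 // norm2_ge0.
have A0 : 0 < norm2 x.
  by rewrite lt_def norm2_ge0 andbT; apply/eqP => /norm2_eq0; apply/eqP.
have B0 : 0 < norm2 y.
  by rewrite lt_def norm2_ge0 andbT; apply/eqP => /norm2_eq0; apply/eqP.
have := dotv_ge0 (norm2 y *: x - norm2 x *: y).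
rewrite !dotvBl !dotvBr !dotvZl !dotvZr -!norm2_sq (dotvC y x).
set A := norm2 x; set B := norm2 y; set d := dotv x y => H.
have HH : 0 <= (A * B) * (A * B - d) by nra.
by move: HH; rewrite pmulr_rge0 ?mulr_gt0 // subr_ge0.
Qed.


Lemma diff_dot (h : 'rV[R]_n -> R) z v : 'd h z v = dotv (grad h z) v.
Proof.
rewrite [in LHS](row_sum_delta v) linear_sum; apply: eq_bigr => i _.
by rewrite linearZ /= mxE mulrC.
Qed.


Lemma phi_derive (h : 'rV[R]_n -> R) (y d : 'rV[R]_n) (t : R) :
  (forall z, differentiable h z) ->
  is_derive t 1 (fun s => h (y + s *: d)) ('d h (y + t *: d) d).
Proof.
move=> hd.
have pd := @is_diffD _ _ _ _ _ _ _ t (is_diff_cst y t) (is_diff_scalel t d).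
have dp : differentiable (cst y + ( *:%R ^~ d)) t by case: pd.
have vp : 'd (cst y + ( *:%R ^~ d)) t = (0 + ( *:%R ^~ d)) :> (R -> _) by case: pd.
have cd : differentiable (h \o (cst y + ( *:%R ^~ d))) t.
  by apply: differentiable_comp => //.
apply: DeriveDef; first exact: diff_derivable.
rewrite deriveE // diff_comp // vp /= add0r scale1r.
by [].
Qed.

Lemma descent (h : 'rV[R]_n -> R) (L : R) y u :
  (forall z, differentiable h z) ->
  (forall y z, norm2 (grad h y - grad h z) <= L * norm2 (y - z)) ->
  h u <= h y + dotv (grad h y) (u - y) + L / 2 * norm2 (u - y) ^+ 2.
Proof.
move=> hd hL; set d := u - y; set a := dotv (grad h y) d.
set b := L / 2 * norm2 d ^+ 2.
pose phi := fun s : R => h (y + s *: d).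
pose psi : R -> R := (phi - (a \*: (@id R))) - (b \*: ((@id R) * (@id R))).
pose dpsi := fun t : R => 'd h (y + t *: d) d - a - b * (t + t).
have Dpsi : forall t, is_derive t (1:R) psi (dpsi t).
  move=> t.
  have D1 := is_deriveZ a (is_derive_id t (1:R)).
  have D2 := is_deriveZ b (is_deriveM (is_derive_id t (1:R)) (is_derive_id t (1:R))).
  have D0 := phi_derive h y d t hd.
  have := is_deriveB (is_deriveB D0 D1) D2.
  move=> H; apply: (is_derive_eq H).
  rewrite /dpsi; congr (_ - _ - _); rewrite /GRing.scale /= ?mulr1 //.
have cont : {within `[0, 1], continuous psi}.
  apply: continuous_subspaceT => t; apply: differentiable_continuous.
  apply/derivable1_diffP; exact: (@ex_derive _ _ _ _ _ _ _ (Dpsi t)).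
have [c c01 Hc] := @MVT R psi dpsi 0 1 ltr01 (fun t _ => Dpsi t) cont.
have e1 : psi 1 = h u - a - b.
  change (h (y + 1 *: d) - a * 1 - b * (1 * 1) = h u - a - b).
  rewrite scale1r.
  have -> : y + d = u by rewrite /d addrC subrK.
  by rewrite !mulr1.
have e0 : psi 0 = h y.
  change (h (y + 0 *: d) - a * 0 - b * (0 * 0) = h y).
  by rewrite scale0r addr0 !mulr0 !subr0.
have c0 : 0 <= c by move: c01; rewrite in_itv /= => /andP[/ltW].
have dle : dpsi c <= 0.
  rewrite /dpsi diff_dot /a -dotvBl.
  set G := grad h (y + c *: d) - grad h y.
  have H2 := CS G d.
  have H1 : norm2 G <= L * (c * norm2 d).
    have := hL (y + c *: d) y.
    by rewrite (_ : y + c *: d - y = c *: d) ?norm2Z ?ger0_norm // addrC addKr.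
  have H3 : norm2 G * norm2 d <= L * (c * norm2 d) * norm2 d.
    exact: (ler_wpM2r (norm2_ge0 d) H1).
  rewrite /b; set N := norm2 d in H3 H2 *.
  have -> : L / 2 * N ^+ 2 * (c + c) = L * (c * N) * N by rewrite expr2; field.
  by rewrite subr_le0; apply: le_trans H3.
move: Hc; rewrite e1 e0 subr0 mulr1 => Hc.
have : h u - a - b - h y <= 0 by rewrite Hc.
by rewrite subr_le0 -addrA -opprD lerBlDr addrA.
Qed.

Lemma sqD (x z : 'rV[R]_n) (c : R) :
  norm2 (x + c *: z) ^+ 2 = dotv x x + 2 * c * dotv z x + c ^+ 2 * dotv z z.
Proof.
rewrite norm2_sq !dotvDl !dotvDr !dotvZl !dotvZr (dotvC x z); ring.
Qed.

Lemma step (f : 'rV[R]_n -> \bar R) (g h : 'rV[R]_n -> R) (L a : R) y u :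
  (forall z, f z != -oo%E) ->
  (forall z, differentiable h z) ->
  (forall y z, norm2 (grad h y - grad h z) <= L * norm2 (y - z)) ->
  (forall z, g z != 0 -> (f z < +oo)%E -> 0 < g z) ->
  (forall z, (f z < +oo)%E -> (0 <= f z + (h z)%:E)%E) ->
  0 < a -> L < a^-1 ->
  g y != 0 -> (f y < +oo)%E ->
  prox (fun v => ((a)%:E * (f v - (fine (Fobj f g h y) * g v)%:E))%E)
    (y - a *: grad h y) u ->
  [/\ g u != 0, (f u < +oo)%E &
  (Fobj f g h u + ((a^-1 - L) / (2 * g u) * norm2 (u - y) ^+ 2)%:E
     <= Fobj f g h y)%E].
Proof.
move=> fnoo hd hL gpos fh0 a0 La gy fy P.
have Efy : f y = (fine (f y))%:E.
  by rewrite fineK // fin_numE fnoo /= -ltey.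
set fy' := fine (f y) in Efy.
set C := fine (Fobj f g h y) in P.
have EC : Fobj f g h y = C%:E by rewrite /C /Fobj gy fy.
have CE : C = (fy' + h y) / g y by rewrite /C /Fobj gy fy.
set G := grad h y in P; set D := u - y.
have {P} := P y.
have -> : u - (y - a *: G) = D + a *: G by rewrite opprB addrA addrAC.
have -> : y - (y - a *: G) = a *: G by rewrite opprB addrA addrAC subrr add0r.
case Efu: (f u) => [fu||]; last by move: (fnoo u); rewrite Efu.
  rewrite Efy /= lee_fin sqD norm2_sq dotvZl dotvZr => P.
  have Hdesc := descent h L y u hd hL; rewrite -/G -/D norm2_sq in Hdesc.
  have fh : 0 <= fu + h u by have := fh0 u; rewrite Efu ltry lee_fin => /(_ isT).
  have Cgy : C * g y = fy' + h y by rewrite CE divfK.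
  set N := dotv D D in P Hdesc *.
  have N0 : 0 <= N := dotv_ge0 D.
  set E := (a^-1 - L) / 2 * N.
  have E0 : 0 <= E by rewrite mulr_ge0 // divr_ge0 // subr_ge0 ltW.
  have K : fu + h u + E <= C * g u.
    have aD := ler_wpM2l (ltW a0) Hdesc.
    have eq1 : a * (fu + h u + E - C * g u) = a * (fu - C * g u) + a * h u + (1 - a * L) / 2 * N.
      by rewrite /E; field; rewrite gt_eqF.
    have : a * (fu + h u + E - C * g u) <= 0.
      rewrite eq1.
      have eq2 : a * (fy' - C * g y) = - (a * h y) by rewrite Cgy; ring.
      rewrite eq2 in P.
      lra.
    by rewrite pmulr_rle0 // subr_le0.
  have gu0 : g u != 0.
    apply/negP => /eqP gu0; move: K; rewrite gu0 mulr0 => K.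
    have E00 : E = 0 by apply/eqP; rewrite eq_le E0 andbT; lra.
    have N00 : N = 0.
      move: E00; rewrite /E => /eqP; rewrite mulf_eq0 => /orP[|/eqP //].
      by rewrite mulf_eq0 invr_eq0 pnatr_eq0 orbF subr_eq0 => /eqP Le; move: La; rewrite Le ltxx.
    have D0 : D = 0 by apply: dotv_eq0.
    have uy : u = y by rewrite -(subrK y u) -/D D0 add0r.
    by move: gy; rewrite -uy gu0 eqxx.
  have gup : 0 < g u by apply: gpos; rewrite // Efu ltry.
  split => //; first by rewrite ltry.
  rewrite EC /Fobj gu0 Efu ltry /= lee_fin norm2_sq -/N.
  have -> : (fu + h u) / g u + (a^-1 - L) / (2 * g u) * N = (fu + h u + E) / g u.
    by rewrite /E; field; rewrite gu0 gt_eqF.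
  by rewrite ler_pdivrMr.
rewrite Efy /= mulry gtr0_sg // mul1e /= leye_eq.
by [].
Qed.
End Alg.
Theorem mainTheorem9 (R : realType) (n : nat)
  (f : 'rV[R]_n -> \bar R) (g h : 'rV[R]_n -> R) (L : R)
  (alpha : nat -> R) (alo ahi : R) (x : nat -> 'rV[R]_n) :
  let Omega := [set y | g y != 0] in
  let F := Fobj f g h in
  (* f proper lsc *)
  proper_fun f -> lsc f ->
  (* Assumption 1 *)
  locally_lipschitz_on f (edom f `&` Omega) ->
  locally_lipschitz_diff_on g (Omega `&` edom f) ->
  (forall y, (Omega `&` edom f) y -> 0 < g y) ->
  (forall y, differentiable h y) -> 0 < L ->
  (forall y z, norm2 (grad h y - grad h z) <= L * norm2 (y - z)) ->
  (forall y, edom f y -> (0 <= f y + (h y)%:E)%E) ->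
  (Omega `&` edom f) !=set0 ->
  (forall (y : 'rV[R]_n) (gam : R), 0 <= gam ->
     prox (fun u => (f u - (gam * g u)%:E)%E) y !=set0) ->
  lsc F -> level_bounded F ->
  (* PPGA *)
  (Omega `&` edom f) (x 0%N) ->
  0 < alo -> ahi < L^-1 -> (forall k, alo <= alpha k <= ahi) ->
  (forall k, let C := fine (F (x k)) in
     prox (fun u => ((alpha k)%:E * (f u - (C * g u)%:E))%E)
          (x k - alpha k *: grad h (x k)) (x k.+1)) ->
  (forall k, (F (x k) < +oo)%E) /\
  (forall k, (F (x k.+1) +
      (((alpha k)^-1 - L) / (2 * g (x k.+1)) * norm2 (x k.+1 - x k) ^+ 2)%:E
      <= F (x k))%E) /\
  (exists2 C : R, 0 <= C &
     (fun k => fine (F (x k))) @ \oo --> C /\ (fun k => F (x k)) @ \oo --> C%:E) /\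
  ((fun k => ((alpha k)^-1 - L) / g (x k.+1) * norm2 (x k.+1 - x k) ^+ 2)
     @ \oo --> 0).

Proof.
move=> Omega F fprop _ _ _ gpos hd L0 HL fh _ _ _ _ x0 alo0 ahiL Hal Hp.
have fnoo : forall z, f z != -oo%E by case: fprop.
have gpos' : forall z, g z != 0 -> (f z < +oo)%E -> 0 < g z.
  by move=> z gz fz; apply: gpos.
have apos : forall k, 0 < alpha k.
  by move=> k; have /andP[+ _] := Hal k; apply: lt_le_trans.
have aL : forall k, L < (alpha k)^-1.
  move=> k; have /andP[_ h1] := Hal k.
  have h2 : alpha k < L^-1 by apply: le_lt_trans ahiL.
  move: h2; rewrite -[L^-1]div1r ltr_pdivlMr // => h2.
  by rewrite -[(alpha k)^-1]div1r ltr_pdivlMr // mulrC.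
have inv : forall k, g (x k) != 0 /\ (f (x k) < +oo)%E.
  elim=> [|k [gk fk]]; first by case: x0.
  have [] := @step R n f g h L (alpha k) (x k) (x k.+1) fnoo hd HL gpos' fh (apos k) (aL k) gk fk (Hp k).
  by move=> -> ->.
have st : forall k, (F (x k.+1) + (((alpha k)^-1 - L) / (2 * g (x k.+1)) *
      norm2 (x k.+1 - x k) ^+ 2)%:E <= F (x k))%E.
  move=> k; have [gk fk] := inv k.
  by have [] := @step R n f g h L (alpha k) (x k) (x k.+1) fnoo hd HL gpos' fh (apos k) (aL k) gk fk (Hp k).
pose s k := fine (F (x k)).
have EF : forall k, F (x k) = (s k)%:E.
  by move=> k; have [gk fk] := inv k; rewrite /s /F /Fobj gk fk.
have s0 : forall k, 0 <= s k.
  move=> k; have [gk fk] := inv k; rewrite /s /F /Fobj gk fk /=.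
  have gp := gpos' _ gk fk.
  apply: divr_ge0; last exact: ltW.
  have := fh _ fk; rewrite -[f (x k)]fineK ?lee_fin //.
  by rewrite fin_numE fnoo /= -ltey.
pose t k := ((alpha k)^-1 - L) / g (x k.+1) * norm2 (x k.+1 - x k) ^+ 2.
have t0 : forall k, 0 <= t k.
  move=> k; have [gk fk] := inv k.+1.
  rewrite /t mulr_ge0 ?exprn_ge0 ?norm2_ge0 // divr_ge0 ?subr_ge0 ?ltW //.
  exact: gpos'.
have st' : forall k, s k.+1 + t k / 2 <= s k.
  move=> k; have := st k; rewrite !EF lee_fin.
  have [gk fk] := inv k.+1; have gp := gpos' _ gk fk.
  suff -> : t k / 2 = ((alpha k)^-1 - L) / (2 * g (x k.+1)) *
      norm2 (x k.+1 - x k) ^+ 2 by [].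
  by rewrite /t; field; rewrite gk gt_eqF ?apos.
have sdec : nonincreasing_seq s.
  apply/nonincreasing_seqP => k; have := st' k; have := t0 k.
  move=> ? ?; lra.
have slb : has_lbound (range s) by exists 0 => _ [k _ <-]; exact: s0.
have Hs := nonincreasing_cvgn sdec slb.
set l := inf _ in Hs.
have l0 : 0 <= l.
  apply: lb_le_inf; first by exists (s 0%N), 0%N.
  by move=> _ [k _ <-]; exact: s0.
split; first by move=> k; rewrite EF ltry.
split; first exact: st.
split.
  exists l => //; split; first exact: Hs.
  apply: cvg_EFin; first by apply: filterE => k; rewrite EF.
  exact: Hs.
have Hs1 : (fun k => s k.+1) @ \oo --> l by rewrite cvg_shiftS.
have H2 : (fun k => 2 * (s k - s k.+1)) @ \oo --> 0.
  have := cvgMl_tmp (a:=2) (cvgB Hs Hs1); rewrite subrr mulr0; exact.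
apply: (@squeeze_cvgr _ _ _ _ (fun=> 0) (fun k => 2 * (s k - s k.+1))); last exact: H2.
  apply: filterE => k; rewrite t0 /=.
  rewrite -/(t k); have := st' k; lra.
apply: cvg_cst.
Qed.
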